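(* Let $n\ge2$ and let $v_A=(a_1,\dots,a_n)$ be the vector associated to a positive integral diamond $A$ of Dynkin type $\mathbb{A}_n$ with $a_n=1$, such that $(T_1(v_A),\dots,T_n(v_A))$ defines a Dyck path in $\mathfrak{D}_{2(n+1)}$. Then for each $1\le i<n$, the vector $(T_1(v_{A+i}),\dots,T_n(v_{A+i}))$ also defines a Dyck path in $\mathfrak{D}_{2(n+1)}$, where $v_{A+i}=(a_1,\dots,a_i,\,a_i+a_{i+1},\,a_{i+1},\dots,a_{n-1})$.
   Context: An $\mathbb{A}_n$-diamond over an integral domain $\mathbf{R}$ is a family $A=(a_{i,j})$ of elements of $\mathbf{R}$, with $a_{1,j}$ for $1\le j\le n+1$ and $a_{2,j}$ for $0\le j\le n$, such that (D1) $a_{2,0}=a_{1,n+1}=1$ and (D2) $a_{1,j}a_{2,j}-a_{2,j-1}a_{1,j+1}=1$ for $1\le j\le n$. For $\mathbf{R}=\mathbb{Z}$, $A$ is a positive integral diamond of Dynkin type $\mathbb{A}_n$ if it also satisfies (D3): there are integers $a,m_a$ with $1\le a\le\lfloor (n+2)/2\rfloor$ such that either $(a_{1,1},a_{2,1})=(a,a+m_a)$ or $(a_{1,1},a_{2,1})=(a+m_a,a)$, and $a_{1,2}=a^2+am_a-1$, where $1\le m_1\le n$ when $a=1$ and $0\le m_a\le n+2(1-a)$ when $a>1$. The vector associated to $A$ is $v_A=(a_{1,1},\dots,a_{1,n})$. A Dyck path of length $2N$ is a word in $U,D$ with $N$ of each letter such that every prefix has at least as many $U$'s as $D$'s; $\mathfrak{D}_{2N}$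 is their set. For $G\in\mathfrak{D}_{2(n+1)}$ let $m_i$ be the number of $U$'s before the $i$-th $D$ and $v_G=(m_1,m_2-1,\dots,m_n-n+1)$; a vector $w\in\mathbb{Z}^n$ defines a Dyck path in $\mathfrak{D}_{2(n+1)}$ if $w=v_G$ for some $G\in\mathfrak{D}_{2(n+1)}$. For $u=(u_1,\dots,u_m)\in\mathbb{N}^m$ and $1\le i\le m$: put $r_0=u_i$; while some $l\in\{1,\dots,i\}$ has $r_k-u_l>0$, let $l_k$ be the largest such $l$ and $r_{k+1}=r_k-u_{l_k}$; if this stops at $r_t$ after $t\ge0$ steps, $T_i(u)=r_t+t$. *)

(* Defs.v *)
From HB Require Import structures.
From mathcomp Require Import all_boot all_order all_algebra.
Set Implicit Arguments. Unset Strict Implicit. Unset Printing Implicit Defensive.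
Import Order.TTheory GRing.Theory Num.Theory.
Local Open Scope ring_scope.

(* a1 j = a_{1,j} (meaningful for 1 <= j <= n+1), a2 j = a_{2,j} (0 <= j <= n). *)
Definition is_diamond (n : nat) (a1 a2 : nat -> int) : Prop :=
  a2 0%N = 1 /\ a1 n.+1 = 1 /\
  (forall j : nat, (1 <= j <= n)%N -> a1 j * a2 j - a2 j.-1 * a1 j.+1 = 1).

Definition D3 (n : nat) (a1 a2 : nat -> int) : Prop :=
  exists a m : int,
    [/\ 1 <= a /\ a <= ((n + 2) %/ 2)%N%:Z,
        (a1 1%N, a2 1%N) = (a, a + m) \/ (a1 1%N, a2 1%N) = (a + m, a),
        a1 2%N = a ^+ 2 + a * m - 1,
        (a = 1 -> 1 <= m /\ m <= n%:Z) &
        (1 < a -> 0 <= m /\ m <= n%:Z + 2 * (1 - a))].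

Definition pos_int_diamond (n : nat) (a1 a2 : nat -> int) : Prop :=
  is_diamond n a1 a2 /\ D3 n a1 a2.

Definition vecA (n : nat) (a1 : nat -> int) : seq int := [seq a1 j | j <- iota 1 n].

Definition vecAplus (n i : nat) (a1 : nat -> int) : seq int :=
  [seq a1 j | j <- iota 1 i] ++ (a1 i + a1 i.+1)
    :: [seq a1 j | j <- iota i.+1 (n.-1 - i)].

(* u is 1-indexed: u_l = nth 0 u l.-1.  cands u i r = the l in {1..i} with
   r - u_l > 0, in increasing order (so the largest one is the last). *)
Definition cands (u : seq int) (i : nat) (r : int) : seq nat :=
  [seq l <- iota 1 i | 0 < r - nth 0 u l.-1].

(* Trun u i r t res : the process started at (r_k = r) after t steps stops,
   producing res = r_final + (number of steps). *)
Inductive Trun (u : seq int) (i : nat) : int -> nat -> int -> Prop :=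
| Trun_stop r t : cands u i r = [::] -> Trun u i r t (r + t%:Z)
| Trun_step r t res : cands u i r != [::] ->
    Trun u i (r - nth 0 u (last 0%N (cands u i r)).-1) t.+1 res ->
    Trun u i r t res.

Definition T_is (u : seq int) (i : nat) (res : int) : Prop :=
  Trun u i (nth 0 u i.-1) 0 res.

Definition T_vec (u : seq int) (n : nat) (ts : seq int) : Prop :=
  size ts = n /\ forall k : nat, (1 <= k <= n)%N -> T_is u k (nth 0 ts k.-1).

(* A word in U (true), D (false). *)
Definition dyck (N : nat) (w : seq bool) : Prop :=
  [/\ size w = (2 * N)%N, count id w = N, count negb w = N &
      forall k : nat, (count negb (take k w) <= count id (take k w))%N].

(* position (0-based) of the i-th D (i >= 1) *)
Definition posD (w : seq bool) (i : nat) : nat :=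
  nth 0%N [seq j <- iota 0 (size w) | ~~ nth true w j] i.-1.

Definition mU (w : seq bool) (i : nat) : nat := count id (take (posD w i) w).

Definition vecG (n : nat) (w : seq bool) : seq int :=
  [seq (mU w k)%:Z - (k.-1)%:Z | k <- iota 1 n].

Definition defines_dyck (n : nat) (v : seq int) : Prop :=
  exists G : seq bool, dyck n.+1 G /\ v = vecG n G.

(* Main.v *)
Require Import Defs.
From HB Require Import structures.
From mathcomp Require Import all_boot all_order all_algebra.
From mathcomp Require Import zify.
Import Order.TTheory GRing.Theory Num.Theory.
Local Open Scope ring_scope.

Ltac mlia := repeat match goal with
  | H : is_true (_ && _) |- _ => case/andP: H => ? ?
  | |- is_true (_ && _) => apply/andP; split
  end; lia.

Definition cand (u : seq int) (r : int) (l : nat) : bool := 0 < r - nth 0 u l.-1.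
Definition maxcand u p r L :=
  [/\ (1 <= L <= p)%N, cand u r L & forall l, (L < l <= p)%N -> ~~ cand u r l].

Lemma cands_nil u p r : cands u p r = [::] <-> forall l, (1 <= l <= p)%N -> ~~ cand u r l.
Proof.
rewrite /cands; split.
- move=> H l Hl; apply/negP => Hc.
  have : l \in [seq l <- iota 1 p | 0 < r - nth 0 u l.-1].
    by rewrite mem_filter mem_iota; apply/andP; split => //; mlia.
  by rewrite H.
- move=> H; apply/eqP; rewrite -[_ == _]negbK -has_filter; apply/hasP => -[l].
  rewrite mem_iota => Hl Hc; have := H l; rewrite /cand Hc => /(_ _)/negP; apply => //; mlia.
Qed.

Lemma last_cands u p r L : maxcand u p r L -> cands u p r != [::] /\ last 0%N (cands u p r) = L.
Proof.
case=> HL Hc Hm.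
have E : iota 1 p = iota 1 L.-1 ++ L :: iota L.+1 (p - L).
  have E0 : p = (L.-1 + (p - L).+1)%N by mlia.
  rewrite {1}E0 iotaD; congr (_ ++ _); have -> : (1 + L.-1 = L)%N by mlia.
  by [].
have E2 : [seq l <- iota L.+1 (p - L) | 0 < r - nth 0 u l.-1] = [::].
  apply/eqP; rewrite -[_ == _]negbK -has_filter; apply/hasP => -[l].
  rewrite mem_iota => Hl Hcl; have := Hm l; rewrite /cand Hcl => /(_ _)/negP; apply => //; mlia.
rewrite /cands E filter_cat /=.
move: Hc; rewrite /cand => ->; rewrite E2.
split; first by case: (filter _ _).
by rewrite last_cat.
Qed.
Arguments last_cands {u p r L}.

Lemma maxcand_exists u p r : cands u p r != [::] -> exists L, maxcand u p r L.
Proof.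
elim: p => [|p IH] //.
have E : iota 1 p.+1 = iota 1 p ++ [:: p.+1] by have := iotaD 1 p 1; rewrite addn1 add1n => ->.
case Hc: (cand u r p.+1).
  move=> _; exists p.+1; split => //; first mlia.
  move=> l Hl; mlia.
rewrite /cands E filter_cat /=; move: (Hc); rewrite /cand /= => ->; rewrite cats0 => H.
case: (IH H) => L [HL HcL Hm]; exists L; split => //; first mlia.
move=> l Hl; case: (ltnP l p.+1) => Hl2; first by apply: Hm; mlia.
have -> : l = p.+1 by mlia.
by rewrite Hc.
Qed.
Arguments maxcand_exists {u p r}.

Lemma last_maxcand u p r : cands u p r != [::] -> maxcand u p r (last 0%N (cands u p r)).
Proof.
move=> H; case: (maxcand_exists H) => L HL.
by case: (last_cands HL) => _ ->.
Qed.
Arguments last_maxcand {u p r}.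

Lemma Trun_step' u p r t res L : maxcand u p r L ->
  Trun u p (r - nth 0 u L.-1) t.+1 res -> Trun u p r t res.
Proof.
move=> HL; case: (last_cands HL) => H1 H2 HT.
by apply: Trun_step => //; rewrite H2.
Qed.
Arguments Trun_step' {u p r t res L}.

Lemma Trun_stop' u p r t : (forall l, (1 <= l <= p)%N -> ~~ cand u r l) ->
  Trun u p r t (r + t%:Z).
Proof. by move/cands_nil => H; apply: Trun_stop. Qed.

Lemma Trun_inv u p r t res : Trun u p r t res ->
  ((forall l, (1 <= l <= p)%N -> ~~ cand u r l) /\ res = r + t%:Z) \/
  (exists L, maxcand u p r L /\ Trun u p (r - nth 0 u L.-1) t.+1 res).
Proof.
case => [r0 t0 H|r0 t0 res0 H HT].
- by left; split => //; apply/cands_nil.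
- by right; exists (last 0%N (cands u p r0)); split => //; apply: last_maxcand.
Qed.

Lemma Trun_sim u p u' p' (P : int -> Prop) :
  (forall r, P r -> (forall l, (1 <= l <= p)%N -> ~~ cand u r l) ->
      forall l, (1 <= l <= p')%N -> ~~ cand u' r l) ->
  (forall r L, P r -> maxcand u p r L -> exists L', maxcand u' p' r L' /\
      nth 0 u' L'.-1 = nth 0 u L.-1) ->
  (forall r L, P r -> maxcand u p r L -> P (r - nth 0 u L.-1)) ->
  forall r t res, P r -> Trun u p r t res -> Trun u' p' r t res.
Proof.
move=> H1 H2 H3 r t res HP HT; elim: HT HP => [r0 t0 H|r0 t0 res0 H HT IH] HP.
- by apply: Trun_stop'; apply: H1 => //; apply/cands_nil.
- have HL := last_maxcand H.
  case: (H2 _ _ HP HL) => L' [HL' E].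
  apply: (Trun_step' HL'); rewrite E; apply: IH; exact: H3.
Qed.

Lemma Trun_shift u p r t res s : Trun u p r t res -> Trun u p r (t + s) (res + s%:Z).
Proof.
elim => [r0 t0 H|r0 t0 res0 H HT IH].
- rewrite -addrA -PoszD; exact: Trun_stop.
- by apply: Trun_step.
Qed.

Lemma Trun_pos u p r t res : Trun u p r t res -> 0 < r -> 0 < res.
Proof.
elim => [r0 t0 H|r0 t0 res0 H HT IH] Hr.
- mlia.
- apply: IH; have := last_maxcand H; case=> _ + _; rewrite /cand //.
Qed.

Lemma Trun_posu u p r t res : Trun u p r t res -> 0 < r ->
  forall l, (1 <= l <= p)%N -> 0 < nth 0 u l.-1.
Proof.
elim => [r0 t0 H|r0 t0 res0 H HT IH] Hr l Hl.
- move/cands_nil: H => /(_ l Hl); rewrite /cand; mlia.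
- apply: IH => //; have := last_maxcand H; case=> _ + _; rewrite /cand //.
Qed.
Definition Dlist (w : seq bool) : seq nat := [seq j <- iota 0 (size w) | ~~ nth true w j].

Lemma size_Dlist w : size (Dlist w) = count negb w.
Proof.
rewrite /Dlist size_filter.
transitivity (count negb (map (nth true w) (iota 0 (size w)))); first by rewrite count_map.
by rewrite -/(mkseq _ _) mkseq_nth.
Qed.

Lemma Dlist_cons d w : Dlist (nseq d true ++ false :: w) = d :: map (addn d.+1) (Dlist w).
Proof.
rewrite /Dlist size_cat size_nseq /= iotaD filter_cat.
have -> : [seq j <- iota 0 d | ~~ nth true (nseq d true ++ false :: w) j] = [::].
  rewrite -(filter_pred0 (iota 0 d)); apply: eq_in_filter => j; rewrite mem_iota => Hj.
  have Hj' : (j < d)%N by mlia.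
  by rewrite nth_cat size_nseq Hj' nth_nseq Hj'.
rewrite add0n /= nth_cat size_nseq ltnn subnn /=.
have -> : iota d.+1 (size w) = map (addn d.+1) (iota 0 (size w)) by rewrite -iotaDl addn0.
rewrite filter_map; congr (_ :: map _ _); apply: eq_filter => j /=.
have E1 : (d.+1 + j < d)%N = false by mlia.
have E2 : (d.+1 + j - d = j.+1)%N by mlia.
by rewrite nth_cat size_nseq E1 E2.
Qed.

Lemma mU_1 d w : mU (nseq d true ++ false :: w) 1 = d.
Proof.
rewrite /mU /posD -/(Dlist _) Dlist_cons /= take_size_cat ?size_nseq //.
by rewrite count_nseq /= mul1n.
Qed.

Lemma mU_S d w k : (k < count negb w)%N ->
  mU (nseq d true ++ false :: w) k.+2 = (d + mU w k.+1)%N.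
Proof.
move=> Hk; rewrite /mU /posD -!/(Dlist _) Dlist_cons /=.
rewrite (nth_map 0%N) ?size_Dlist //.
rewrite take_cat size_nseq (_ : (d.+1 + _ < d)%N = false); last by mlia.
rewrite (_ : (d.+1 + _ - d = (nth 0 (Dlist w) k).+1)%N); last by mlia.
by rewrite /= count_cat count_nseq /= mul1n.
Qed.

Fixpoint W (m : nat -> nat) (j N : nat) : seq bool :=
  match N with
  | 0 => [::]
  | N'.+1 => nseq (m j.+1 - m j) true ++ false :: W m j.+1 N'
  end.

Section WL.
Variable m : nat -> nat.
Hypothesis mono : forall x, (m x <= m x.+1)%N.

Lemma mono_le a b : (a <= b)%N -> (m a <= m b)%N.
Proof.
move=> H; rewrite -(subnKC H); elim: (b - a)%N => [|k IH]; first by rewrite addn0.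
by rewrite addnS; apply: leq_trans IH (mono _).
Qed.

Lemma W_negb j N : count negb (W m j N) = N.
Proof. by elim: N j => [|N IH] j //=; rewrite count_cat count_nseq /= IH. Qed.

Lemma W_id j N : count id (W m j N) = (m (j + N) - m j)%N.
Proof.
elim: N j => [|N IH] j /=; first by rewrite addn0 subnn.
rewrite count_cat count_nseq /= IH mul1n (_ : (j + N.+1 = j.+1 + N)%N); last by lia.
have := mono j; have := mono_le (j.+1) (j.+1 + N) (leq_addr _ _); lia.
Qed.

Lemma W_size j N : size (W m j N) = (m (j + N) - m j + N)%N.
Proof.
rewrite -(count_predC id) W_id; congr addn; rewrite -{2}(W_negb j N); exact: eq_count.
Qed.

Lemma W_mU j N k : (1 <= k <= N)%N -> mU (W m j N) k = (m (j + k) - m j)%N.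
Proof.
elim: N j k => [|N IH] j k Hk; first by mlia.
case: k Hk => [|[|k]] Hk //=.
  by rewrite mU_1 addn1.
rewrite mU_S ?W_negb; last by mlia.
rewrite IH; last by mlia.
rewrite (_ : (j.+1 + k.+1 = j + k.+2)%N); last by lia.
have := mono j; have := mono_le (j.+1) (j + k.+2) (ltac:(lia)); lia.
Qed.

Lemma W_prefix j N c : (forall x, (1 <= x <= N)%N -> (x <= c + (m (j + x) - m j))%N) ->
  forall k, (count negb (take k (W m j N)) <= c + count id (take k (W m j N)))%N.
Proof.
elim: N j c => [|N IH] j c H k /=; first by case: k.
rewrite take_cat size_nseq.
case: ltnP => Hk.
  by rewrite take_nseq ?count_nseq //=; mlia.
case E: (k - (m j.+1 - m j))%N => [|k'].
  by rewrite take0 cats0 count_nseq /=; mlia.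
rewrite /= !count_cat !count_nseq /= !mul1n.
have H1 := H 1%N isT.
have IH' := IH j.+1 (c + (m j.+1 - m j)).-1.
have HH : forall x, (1 <= x <= N)%N ->
    (x <= (c + (m j.+1 - m j)).-1 + (m (j.+1 + x) - m j.+1))%N.
  move=> x Hx; have := H x.+1; rewrite addnS -addSn.
  have := mono j; have := mono_le (j.+1) (j.+1 + x) (leq_addr _ _).
  move=> A B C; have := C (ltac:(mlia)); rewrite addn1 in H1; lia.
have := IH' HH k'; rewrite addn1 in H1; lia.
Qed.
End WL.

Lemma count_take_mono (a : pred bool) (s : seq bool) p q : (p <= q)%N ->
  (count a (take p s) <= count a (take q s))%N.
Proof.
move=> H; rewrite -(take_takel s H).
by rewrite -{2}(cat_take_drop p (take q s)) count_cat leq_addr.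
Qed.

Lemma mU_mono w k : (1 <= k)%N -> (k < count negb w)%N -> (mU w k <= mU w k.+1)%N.
Proof.
move=> H1 H2; rewrite /mU /posD -!/(Dlist _); apply: count_take_mono.
have Hs : sorted ltn (Dlist w) by apply: sorted_filter; [exact: ltn_trans|exact: iota_ltn_sorted].
have := (sortedP 0%N Hs) k.-1; rewrite prednK // size_Dlist => /(_ H2) /ltnW //.
Qed.

Lemma nth_vecG n G j : (j < n)%N -> nth 0 (vecG n G) j = (mU G j.+1)%:Z - j%:Z.
Proof.
move=> Hj; rewrite /vecG (nth_map 0%N) ?size_iota // nth_iota //.
Qed.

Lemma dyck_of (n : nat) (v : seq int) : (1 <= n)%N -> size v = n ->
  (forall k, (1 <= k <= n)%N -> 1 <= nth 0 v k.-1) ->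
  (forall k, (1 <= k < n)%N -> nth 0 v k.-1 <= nth 0 v k + 1) ->
  nth 0 v n.-1 + (n.-1)%:Z <= (n.+1)%:Z ->
  defines_dyck n v.
Proof.
move=> Hn Hs Hp0 Hm0 Hl0.
have Hp : forall k, (1 <= k <= n)%N -> 1 <= @nth int 0 v k.-1 := Hp0.
have Hm : forall k, (1 <= k < n)%N -> @nth int 0 v k.-1 <= @nth int 0 v k + 1 := Hm0.
have Hl : @nth int 0 v n.-1 + (n.-1)%:Z <= (n.+1)%:Z := Hl0.
clear Hp0 Hm0 Hl0.
pose m := fun x : nat => if x == 0%N then 0%N else if (x <= n)%N then (absz (@nth int 0%R v x.-1) + x.-1)%N else n.+1.
have mono : forall x, (m x <= m x.+1)%N.
  move=> x; rewrite /m /=; case: (x =P 0%N) => [->|Hx] //.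
  case: (leqP x.+1 n) => Hx1.
    rewrite (_ : (x <= n)%N); last by lia.
    have := Hm x (ltac:(mlia)); have := Hp x (ltac:(mlia)); have := Hp x.+1 (ltac:(mlia)).
    rewrite /=; lia.
  case: (leqP x n) => Hx2 //.
  have -> : x = n by lia.
  have := Hp n (ltac:(mlia)); move: Hl; lia.
exists (W m 0 n.+1); split.
  split.
  - rewrite W_size // add0n /m /= ltnn; lia.
  - rewrite W_id // add0n /m /= ltnn; lia.
  - by rewrite W_negb.
  - move=> k; rewrite -[X in (_ <= X)%N]add0n; apply: W_prefix => // x Hx; rewrite /m /= !add0n.
    case: (x =P 0%N) => [|Hx0]; first by lia.
    case: (leqP x n) => Hxn; last by mlia.
    have := Hp x (ltac:(mlia)); lia.
apply: (@eq_from_nth int 0%R); first by rewrite Hs /vecG size_map size_iota.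
move=> j; rewrite Hs => Hj; rewrite nth_vecG // W_mU //; last by mlia.
rewrite /m add0n /= (_ : (j < n)%N) //.
have := Hp j.+1 (ltac:(mlia)); rewrite /= => H.
lia.
Qed.

Lemma nth_vecA n a1 j : (j < n)%N -> nth 0 (vecA n a1) j = a1 j.+1.
Proof. by move=> Hj; rewrite /vecA (nth_map 0%N) ?size_iota // nth_iota // add1n. Qed.

Lemma Trun_eqpre u u' p r t res : (forall l, (1 <= l <= p)%N -> nth 0 u l.-1 = nth 0 u' l.-1) ->
  Trun u p r t res -> Trun u' p r t res.
Proof.
move=> H; apply: (@Trun_sim u p u' p (fun _ => True)) => //.
- move=> r0 _ Hn l Hl; rewrite /cand -H //; exact: Hn.
- move=> r0 L _ [HL Hc Hm]; exists L; split; last by rewrite H.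
  split => //; first by rewrite /cand -H.
  move=> l Hl; rewrite /cand -H; last by mlia.
  exact: Hm.
Qed.

Arguments Trun_pos {u p r t res}.
Arguments Trun_posu {u p r t res}.
Arguments Trun_inv {u p r t res}.
Arguments Trun_shift {u p r t res}.

Lemma nth_vecAplus n i a1 j : (1 <= i < n)%N -> (j < n)%N ->
  nth 0 (vecAplus n i a1) j =
  if (j < i)%N then a1 j.+1 else if j == i then a1 i + a1 i.+1 else a1 j.
Proof.
move=> Hi Hj; rewrite /vecAplus nth_cat size_map size_iota.
case: ltnP => Hji.
  by rewrite (nth_map 0%N) ?size_iota // nth_iota // add1n.
case: (j =P i) => [->|Hne]; first by rewrite subnn.
have -> : (j - i = (j - i).-1.+1)%N by lia.
rewrite /= (nth_map 0%N) ?size_iota; last by lia.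
rewrite nth_iota; last by lia.
congr a1; lia.
Qed.

Theorem proposition14 (n : nat) (a1 a2 : nat -> int) :
  (2 <= n)%N ->
  pos_int_diamond n a1 a2 ->
  a1 n = 1 ->
  (exists ts : seq int, T_vec (vecA n a1) n ts /\ defines_dyck n ts) ->
  forall i : nat, (1 <= i < n)%N ->
    exists ts : seq int, T_vec (vecAplus n i a1) n ts /\ defines_dyck n ts.
Proof.
move=> Hn _ Han [ts [[Hsz HT] [G [HG Hts]]]] i Hi.
set u := vecA n a1; set v := vecAplus n i a1.
have Hu : forall l, (1 <= l <= n)%N -> nth 0 u l.-1 = a1 l.
  move=> l Hl; rewrite /u nth_vecA ?prednK //; mlia.
have Hv1 : forall l, (1 <= l <= i)%N -> nth 0 v l.-1 = a1 l.
  move=> l Hl; rewrite /v nth_vecAplus //; last by mlia.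
  rewrite (_ : (l.-1 < i)%N) ?prednK //; mlia.
have Hv2 : nth 0 v i = a1 i + a1 i.+1.
  by rewrite /v nth_vecAplus // ?eqxx ?ltnn //; mlia.
have Hv3 : forall l, (i.+2 <= l <= n)%N -> nth 0 v l.-1 = a1 l.-1.
  move=> l Hl; rewrite /v nth_vecAplus //; last by mlia.
  rewrite (_ : (l.-1 < i)%N = false); last by mlia.
  by rewrite (_ : (l.-1 == i) = false) //; apply/eqP; mlia.
pose t := fun k => nth 0 ts k.-1.
have HTk : forall k, (1 <= k <= n)%N -> Trun u k (a1 k) 0 (t k).
  move=> k Hk; have := HT k Hk; rewrite /T_is Hu //.
have Hpos : forall l, (1 <= l <= n)%N -> 0 < a1 l.
  move=> l Hl; rewrite -Hu //; apply: (Trun_posu (HTk n _)) => //; first by mlia.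
  by rewrite Han.
have tpos : forall k, (1 <= k <= n)%N -> 0 < t k.
  move=> k Hk; apply: (Trun_pos (HTk k Hk)); exact: Hpos.
have tn : t n = 1.
  case: (Trun_inv (HTk n (ltac:(mlia)))) => [[_ ->]|[L [[HL Hc _] _]]].
    by rewrite Han addr0.
  move: Hc; rewrite /cand Hu // Han; have := Hpos L HL; lia.
have cG : count negb G = n.+1 by case: HG.
have tmono : forall k, (1 <= k < n)%N -> t k <= t k.+1 + 1.
  move=> k Hk; rewrite /t Hts /= nth_vecG; last by mlia.
  rewrite nth_vecG; last by mlia.
  have := mU_mono G k (ltac:(mlia)) (ltac:(rewrite cG; mlia)).
  rewrite prednK; last by mlia.
  lia.
have tbound : forall k, (1 <= k <= n)%N -> t k + (k.-1)%:Z <= n%:Z.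
  have H : forall d, (d < n)%N -> t (n - d)%N + ((n - d).-1)%:Z <= n%:Z.
    elim => [|d IH] Hd; first by rewrite subn0 tn; lia.
    have := IH (ltac:(lia)); have := tmono (n - d.+1)%N (ltac:(mlia)).
    rewrite (_ : (n - d.+1).+1 = n - d)%N; last by lia.
    lia.
  move=> k Hk; have := H (n - k)%N (ltac:(mlia)).
  rewrite (_ : (n - (n - k) = k)%N) //; mlia.
have cU : forall r l, (1 <= l <= n)%N -> cand u r l = (0 < r - a1 l).
  by move=> r l Hl; rewrite /cand Hu.
have cV1 : forall r l, (1 <= l <= i)%N -> cand v r l = (0 < r - a1 l).
  by move=> r l Hl; rewrite /cand Hv1.
have cV2 : forall r, cand v r i.+1 = (0 < r - (a1 i + a1 i.+1)).
  by move=> r; rewrite /cand /= Hv2.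
have cV3 : forall r l, (i.+2 <= l <= n)%N -> cand v r l = (0 < r - a1 l.-1).
  by move=> r l Hl; rewrite /cand Hv3.
have Hpi := Hpos i (ltac:(mlia)).
have Hpi1 := Hpos i.+1 (ltac:(mlia)).
have S1 : forall k, (1 <= k <= i)%N -> Trun v k (a1 k) 0 (t k).
  move=> k Hk; apply: (Trun_eqpre u v k); last by apply: HTk; mlia.
  move=> l Hl; rewrite Hu ?Hv1 //; mlia.
have S2 : Trun v i.+1 (a1 i.+1) 0 (t i.+1).
  apply: (@Trun_sim u i.+1 v i.+1 (fun r => r <= a1 i.+1)); last first.
  - by apply: HTk; mlia.
  - by [].
  - move=> r L Hr [HL Hc Hm]; rewrite Hu; last by mlia.
    have := Hpos L (ltac:(mlia)); lia.
  - move=> r L Hr [HL Hc Hm].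
    have HLi : (L <= i)%N.
      case: (leqP L i) => // HL'; have EL : L = i.+1 by mlia.
      move: Hc; rewrite EL cU; last by mlia.
      lia.
    exists L; split; last by rewrite Hv1 ?Hu //; mlia.
    split; first by mlia.
      rewrite cV1; last by mlia.
      by rewrite -cU //; mlia.
    move=> l Hl; case: (leqP l i) => Hli.
      rewrite cV1; last by mlia.
      rewrite -cU; last by mlia.
      by apply: Hm.
    have -> : l = i.+1 by mlia.
    rewrite cV2; lia.
  - move=> r Hr Hno l Hl; case: (leqP l i) => Hli.
      rewrite cV1; last by mlia.
      rewrite -cU; last by mlia.
      by apply: Hno.
    have -> : l = i.+1 by mlia.
    rewrite cV2; lia.
have S2' : Trun v i.+1 (nth 0 v i.+1.-1) 0 (t i.+1 + 1).
  have HL : maxcand v i.+1 (a1 i + a1 i.+1) i.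
    split; first by mlia.
      by rewrite cV1; [lia|mlia].
    move=> l Hl; have -> : l = i.+1 by mlia.
    rewrite cV2; lia.
  rewrite /= Hv2; apply: (Trun_step' HL).
  rewrite Hv1; last by mlia.
  rewrite (addrC (a1 i)) addrK; exact: (Trun_shift 1 S2).
have S3 : forall k, (i.+2 <= k <= n)%N -> Trun v k (a1 k.-1) 0 (t k.-1).
  move=> k Hk.
  apply: (@Trun_sim u k.-1 v k (fun _ => True)); last first.
  - by apply: HTk; mlia.
  - by [].
  - by [].
  - move=> r L _ [HL Hc Hm].
    case: (leqP L i) => HLi.
      exists L; split; last by rewrite Hv1 ?Hu //; mlia.
      split; first by mlia.
        rewrite cV1; last by mlia.
      by rewrite -cU //; mlia.
      move=> l Hl; case: (leqP l i) => Hli.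
        rewrite cV1; last by mlia.
        rewrite -cU; last by mlia.
        by apply: Hm; mlia.
      case: (l =P i.+1) => [->|Hne].
        have := Hm i.+1 (ltac:(mlia)); rewrite cU; last by mlia.
        rewrite cV2; lia.
      rewrite cV3; last by mlia.
      have := Hm l.-1 (ltac:(mlia)); rewrite cU; last by mlia.
      by [].
    exists L.+1; split; last by rewrite Hv3 ?Hu //; mlia.
    split; first by mlia.
      rewrite cV3; last by mlia.
      by rewrite -cU //; mlia.
    move=> l Hl; rewrite cV3; last by mlia.
    have := Hm l.-1 (ltac:(mlia)); rewrite cU; last by mlia.
    by [].
  - move=> r _ Hno l Hl; case: (leqP l i) => Hli.
      rewrite cV1; last by mlia.
      rewrite -cU; last by mlia.
      by apply: Hno; mlia.
    case: (l =P i.+1) => [->|Hne].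
      have := Hno i.+1 (ltac:(mlia)); rewrite cU; last by mlia.
      rewrite cV2; lia.
    rewrite cV3; last by mlia.
    have := Hno l.-1 (ltac:(mlia)); rewrite cU; last by mlia.
    by [].
pose f := fun k => if (k <= i)%N then t k else if k == i.+1 then t i.+1 + 1 else t k.-1.
have Hf1 : forall k, (k <= i)%N -> f k = t k by move=> k Hk; rewrite /f Hk.
have Hf2 : f i.+1 = t i.+1 + 1 by rewrite /f ltnn eqxx.
have Hf3 : forall k, (i.+2 <= k)%N -> f k = t k.-1.
  move=> k Hk; rewrite /f (_ : (k <= i)%N = false); last by lia.
  by rewrite (_ : (k == i.+1) = false) //; apply/eqP; lia.
exists [seq f k | k <- iota 1 n].
have Hnth : forall k, (1 <= k <= n)%N -> nth 0 [seq f k | k <- iota 1 n] k.-1 = f k.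
  move=> k Hk; rewrite (nth_map 0%N) ?size_iota; last by mlia.
  rewrite nth_iota; last by mlia.
  by rewrite add1n prednK //; mlia.
split.
  split; first by rewrite size_map size_iota.
  move=> k Hk; rewrite /T_is Hnth //.
  case: (leqP k i) => Hki.
    by rewrite Hv1 ?Hf1 //; [apply: S1; mlia | mlia].
  case: (k =P i.+1) => [->|Hne]; first by rewrite Hf2.
  rewrite Hv3; last by mlia.
  rewrite Hf3; last by lia.
  apply: S3; mlia.
apply: dyck_of.
- lia.
- by rewrite size_map size_iota.
- move=> k Hk; rewrite Hnth //.
  case: (leqP k i) => Hki.
    by rewrite Hf1 //; have := tpos k Hk; lia.
  case: (k =P i.+1) => [->|Hne].
    by rewrite Hf2; have := tpos i.+1 (ltac:(mlia)); lia.
  rewrite Hf3; last by lia.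
  have := tpos k.-1 (ltac:(mlia)); lia.
- move=> k Hk; rewrite Hnth; last by mlia.
  have -> : nth 0 [seq f k | k <- iota 1 n] k = f k.+1 by exact: (Hnth k.+1 (ltac:(mlia))).
  case: (ltnP k i) => Hki.
    rewrite Hf1 ?Hf1 //; last by lia.
    have := tmono k (ltac:(mlia)); lia.
  case: (k =P i) => [->|Hne].
    rewrite Hf1 // Hf2; have := tmono i (ltac:(mlia)); lia.
  case: (k =P i.+1) => [->|Hne2].
    rewrite Hf2 Hf3 //=; lia.
  rewrite Hf3; last by lia.
  rewrite Hf3 /=; last by lia.
  have := tmono k.-1 (ltac:(mlia)); rewrite prednK; last by lia.
  lia.
- rewrite Hnth; last by mlia.
  case: (n =P i.+1) => [En|Hne].
    rewrite {1}En Hf2 -En tn; lia.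
  rewrite Hf3; last by mlia.
  have := tbound n.-1 (ltac:(mlia)); lia.
Qed.
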